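(* Let $p,q\ge 2$ be integers with $q\equiv \pm 1\pmod p$. Then $$\sum_{\substack{n=1\\ p\nmid n,\ q\nmid n}}^{pq-1}\frac{\cot(\pi n/p)\cot(\pi n/q)}{\sin^2(\pi n/(pq))}=\begin{cases}\dfrac{1}{45p}(p^2-1)(p^2-4)(q-1)^2(q+2), & q\equiv 1\pmod p,\\[2mm] \dfrac{1}{45p}(p^2-1)(p^2-4)(q+1)^2(q-2), & q\equiv -1\pmod p.\end{cases}$$ *)

(* Defs.v *)
From Stdlib Require Import Reals Lra Lia Arith.
Open Scope R_scope.

(* cotangent, defined as cos/sin (only evaluated at points where sin <> 0) *)
Definition cot (x : R) : R := cos x / sin x.

Fixpoint sum_filter (P : nat -> bool) (f : nat -> R) (b : nat) : R :=
  match b with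
  | O => if P O then f O else 0
  | S k => sum_filter P f k + (if P (S k) then f (S k) else 0)
  end.

Definition term (p q n : nat) : R :=
  cot (PI * INR n / INR p) * cot (PI * INR n / INR q)
  / (sin (PI * INR n / INR (p * q)) ^ 2).

Definition admissible (p q n : nat) : bool :=
  (1 <=? n)%nat && negb (n mod p =? 0)%nat && negb (n mod q =? 0)%nat.

Definition the_sum (p q : nat) : R :=
  sum_filter (admissible p q) (term p q) (p * q - 1).

(* Main.v *)
Require Import Defs.
From Stdlib Require Import Reals Arith ZArith Lia Lra.
Open Scope R_scope.

Fixpoint sumR (n : nat) (f : nat -> R) : R :=
  match n with O => 0 | S k => sumR k f + f k end.

Lemma sumR_ext n f g : (forall i, (i < n)%nat -> f i = g i) -> sumR n f = sumR n g.
Proof. induction n; simpl; intros H; auto. rewrite IHn by (intros; apply H; lia). rewrite H by lia. auto. Qed.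

Lemma sumR_plus n f g : sumR n (fun i => f i + g i) = sumR n f + sumR n g.
Proof. induction n; simpl; [lra|]. rewrite IHn; lra. Qed.

Lemma sumR_minus n f g : sumR n (fun i => f i - g i) = sumR n f - sumR n g.
Proof. induction n; simpl; [lra|]. rewrite IHn; lra. Qed.

Lemma sumR_scal n c f : sumR n (fun i => c * f i) = c * sumR n f.
Proof. induction n; simpl; [lra|]. rewrite IHn; lra. Qed.

Lemma sumR_zero n f : (forall i, (i < n)%nat -> f i = 0) -> sumR n f = 0.
Proof. intros H. rewrite (sumR_ext n f (fun _ => 0)) by auto. clear H. induction n; simpl; lra. Qed.

Lemma sumR_swap n m f : sumR n (fun i => sumR m (fun j => f i j)) = sumR m (fun j => sumR n (fun i => f i j)).
Proof. induction n; simpl. - symmetry; apply sumR_zero; auto. - rewrite IHn, <- sumR_plus. auto. Qed.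

Lemma sumR_mult n m f g : sumR n f * sumR m g = sumR n (fun i => sumR m (fun j => f i * g j)).
Proof. induction n; simpl. - lra. - rewrite <- IHn, Rmult_plus_distr_r. f_equal. rewrite <- sumR_scal. auto. Qed.

Lemma sumR_single n j0 f : (j0 < n)%nat -> (forall j, (j < n)%nat -> j <> j0 -> f j = 0) -> sumR n f = f j0.
Proof. induction n; intros H1 H2; [lia|]. simpl. destruct (Nat.eq_dec j0 n).
 - subst. rewrite sumR_zero. lra. intros; apply H2; lia.
 - rewrite IHn. rewrite (H2 n) by lia. lra. lia. intros j Hj Hne; apply H2; lia. Qed.

Lemma sumR_telescope n b : sumR n (fun j => b (S j) - b j) = b n - b O.
Proof. induction n; simpl; [lra|]. rewrite IHn. lra. Qed.

Lemma sumR_abel n h b : sumR n (fun j => h j * (b (S j) - b j)) =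
  h n * b n - h O * b O - sumR n (fun j => (h (S j) - h j) * b (S j)).
Proof. induction n; simpl; [lra|]. rewrite IHn. lra. Qed.

Lemma sumR_shift n f : sumR (S n) f = f O + sumR n (fun i => f (S i)).
Proof. induction n; simpl in *; [lra|]. rewrite IHn. lra. Qed.

Lemma sumR_piece n m f A B : (m <= n)%nat ->
  (forall j, (j < m)%nat -> f j = A j) -> (forall j, (m <= j < n)%nat -> f j = B j) ->
  sumR n f = sumR m A + sumR n B - sumR m B.
Proof. intros Hmn HA HB. induction n.
 - assert (m = O) by lia. subst. simpl. lra.
 - destruct (Nat.eq_dec m (S n)).
   + subst. simpl. rewrite (sumR_ext n f A) by (intros; apply HA; lia). rewrite HA by lia. lra.
   + simpl. rewrite IHn by (try lia; intros; apply HB; lia). rewrite HB by lia. lra. Qed.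

Lemma sum_filter_sumR P f N : sum_filter P f N = sumR (S N) (fun n => if P n then f n else 0).
Proof. induction N; simpl; [lra|]. rewrite IHN. simpl. lra. Qed.

Lemma sin_pm x y : sin (x + y) - sin (x - y) = 2 * cos x * sin y.
Proof. rewrite sin_plus, sin_minus. ring. Qed.
Lemma cos_pm x y : cos (x - y) - cos (x + y) = 2 * sin x * sin y.
Proof. rewrite cos_plus, cos_minus. ring. Qed.

Section T.
Variable phi : R.
Let a j := cos ((2 * INR j - 1) * phi).
Let b j := sin ((2 * INR j - 1) * phi).
Let c j := sin (2 * INR j * phi).
Let d j := cos (2 * INR j * phi).

Lemma tA j : 2 * sin phi * sin (2 * INR j * phi) = a j - a (S j).
Proof. unfold a. rewrite S_INR.
 replace ((2 * INR j - 1) * phi) with (2 * INR j * phi - phi) by ring.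
 replace ((2 * (INR j + 1) - 1) * phi) with (2 * INR j * phi + phi) by ring.
 rewrite cos_pm. ring. Qed.
Lemma tB j : 2 * sin phi * cos (2 * INR j * phi) = b (S j) - b j.
Proof. unfold b. rewrite S_INR.
 replace ((2 * INR j - 1) * phi) with (2 * INR j * phi - phi) by ring.
 replace ((2 * (INR j + 1) - 1) * phi) with (2 * INR j * phi + phi) by ring.
 rewrite sin_pm. ring. Qed.
Lemma tC j : 2 * sin phi * cos ((2 * INR j + 1) * phi) = c (S j) - c j.
Proof. unfold c. rewrite S_INR.
 replace (2 * INR j * phi) with ((2 * INR j + 1) * phi - phi) by ring.
 replace (2 * (INR j + 1) * phi) with ((2 * INR j + 1) * phi + phi) by ring.
 rewrite sin_pm. ring. Qed.
Lemma tD j : 2 * sin phi * sin ((2 * INR j + 1) * phi) = d j - d (S j).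
Proof. unfold d. rewrite S_INR.
 replace (2 * INR j * phi) with ((2 * INR j + 1) * phi - phi) by ring.
 replace (2 * (INR j + 1) * phi) with ((2 * INR j + 1) * phi + phi) by ring.
 rewrite cos_pm. ring. Qed.

Variable N : nat.
Hypothesis hs : sin phi <> 0.
Hypothesis hN : sin (INR N * phi) = 0.

Lemma vc : c N = 0.
Proof. unfold c. replace (2 * INR N * phi) with (2 * (INR N * phi)) by ring. rewrite sin_2a, hN. ring. Qed.
Lemma vd : d N = 1.
Proof. unfold d. replace (2 * INR N * phi) with (2 * (INR N * phi)) by ring. rewrite cos_2a_sin, hN. ring. Qed.
Lemma va : a N = cos phi.
Proof. unfold a. replace ((2 * INR N - 1) * phi) with (2 * INR N * phi - phi) by ring.
 rewrite cos_minus. fold (c N). fold (d N). rewrite vc, vd. ring. Qed.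
Lemma vb : b N = - sin phi.
Proof. unfold b. replace ((2 * INR N - 1) * phi) with (2 * INR N * phi - phi) by ring.
 rewrite sin_minus. fold (c N). fold (d N). rewrite vc, vd. ring. Qed.

Lemma sum_cos0 : sumR N (fun j => cos (2 * INR j * phi)) = 0.
Proof.
 assert (H : 2 * sin phi * sumR N (fun j => cos (2 * INR j * phi)) = 0).
 { rewrite <- sumR_scal. rewrite (sumR_ext _ _ (fun j => b (S j) - b j)) by (intros; apply tB).
   rewrite sumR_telescope, vb. unfold b. simpl. replace ((2*0-1)*phi) with (- phi) by ring.
   rewrite sin_neg. ring. }
 apply Rmult_integral in H. destruct H as [H|H]; auto. exfalso. apply hs. lra. Qed.

Lemma sum_cos_odd0 : sumR N (fun j => cos ((2 * INR j + 1) * phi)) = 0.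
Proof.
 assert (H : 2 * sin phi * sumR N (fun j => cos ((2 * INR j + 1) * phi)) = 0).
 { rewrite <- sumR_scal. rewrite (sumR_ext _ _ (fun j => c (S j) - c j)) by (intros; apply tC).
   rewrite sumR_telescope, vc. unfold c. simpl. replace (2*0*phi) with 0 by ring.
   rewrite sin_0. ring. }
 apply Rmult_integral in H. destruct H as [H|H]; auto. exfalso. apply hs. lra. Qed.

Lemma sum_sin_odd0 : sumR N (fun j => sin ((2 * INR j + 1) * phi)) = 0.
Proof.
 assert (H : 2 * sin phi * sumR N (fun j => sin ((2 * INR j + 1) * phi)) = 0).
 { rewrite <- sumR_scal. rewrite (sumR_ext _ _ (fun j => - (d (S j) - d j))) by (intros; rewrite tD; ring).
   rewrite (sumR_ext _ _ (fun j => (-1) * (d (S j) - d j))) by (intros; ring).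
   rewrite sumR_scal, sumR_telescope, vd. unfold d. simpl. replace (2*0*phi) with 0 by ring.
   rewrite cos_0. ring. }
 apply Rmult_integral in H. destruct H as [H|H]; auto. exfalso. apply hs. lra. Qed.

Lemma Fcot : sumR N (fun j => INR j * sin (2 * INR j * phi)) = - INR N / 2 * cos phi / sin phi.
Proof.
 assert (H : 2 * sin phi * sumR N (fun j => INR j * sin (2 * INR j * phi)) = - INR N * cos phi).
 { rewrite <- sumR_scal.
   rewrite (sumR_ext _ _ (fun j => (-1) * (INR j * (a (S j) - a j)))) by (intros; replace (2 * sin phi * (INR i * sin (2 * INR i * phi))) with (INR i * (2 * sin phi * sin (2 * INR i * phi))) by ring; rewrite tA; ring).
   rewrite sumR_scal, sumR_abel.
   rewrite (sumR_ext _ _ (fun j => cos ((2 * INR j + 1) * phi))).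
   2:{ intros. unfold a. rewrite S_INR. replace ((2 * (INR i + 1) - 1) * phi) with ((2 * INR i + 1) * phi) by ring. ring. }
   rewrite sum_cos_odd0, va. simpl. ring. }
 field_simplify_eq; auto. lra. Qed.

Lemma Fcsc : sumR N (fun j => INR j * (INR N - INR j) * cos (2 * INR j * phi)) = - INR N / (2 * sin phi ^ 2).
Proof.
 assert (H1 : 2 * sin phi * sumR N (fun j => INR j * sin ((2 * INR j + 1) * phi)) = - INR N).
 { rewrite <- sumR_scal.
   rewrite (sumR_ext _ _ (fun j => (-1) * (INR j * (d (S j) - d j)))) by (intros; replace (2 * sin phi * (INR i * sin ((2 * INR i + 1) * phi))) with (INR i * (2 * sin phi * sin ((2 * INR i + 1) * phi))) by ring; rewrite tD; ring).
   rewrite sumR_scal, sumR_abel.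
   rewrite (sumR_ext _ _ (fun j => d (S j))).
   2:{ intros. rewrite S_INR. ring. }
   assert (E : sumR N (fun j => d (S j)) = 0).
   { assert (E2 := sumR_shift N d). change (sumR (S N) d) with (sumR N d + d N) in E2.
     assert (E3 : sumR N d = 0) by exact sum_cos0.
     assert (E4 : d O = 1) by (unfold d; simpl; replace (2*0*phi) with 0 by ring; apply cos_0).
     rewrite vd in E2. lra. }
   rewrite E, vd. simpl. ring. }
 assert (H : 2 * sin phi * sumR N (fun j => INR j * (INR N - INR j) * cos (2 * INR j * phi)) = - INR N / sin phi).
 { rewrite <- sumR_scal.
   rewrite (sumR_ext _ _ (fun j => (INR j * (INR N - INR j)) * (b (S j) - b j))) by (intros; replace (2 * sin phi * (INR i * (INR N - INR i) * cos (2 * INR i * phi))) with (INR i * (INR N - INR i) * (2 * sin phi * cos (2 * INR i * phi))) by ring; rewrite tB; ring).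
   rewrite (sumR_abel N (fun j => INR j * (INR N - INR j))).
   rewrite (sumR_ext _ _ (fun j => (INR N - 1) * sin ((2 * INR j + 1) * phi) - 2 * (INR j * sin ((2 * INR j + 1) * phi)))).
   2:{ intros. unfold b. rewrite !S_INR. replace ((2 * (INR i + 1) - 1) * phi) with ((2 * INR i + 1) * phi) by ring. ring. }
   rewrite sumR_minus, !sumR_scal, sum_sin_odd0.
   assert (E : sumR N (fun j => INR j * sin ((2 * INR j + 1) * phi)) = - INR N / (2 * sin phi)).
   { field_simplify_eq; auto. rewrite <- H1. ring. }
   rewrite E. simpl. field. auto. }
 apply (Rmult_eq_reg_l (2 * sin phi)). rewrite H. field. auto.
 intro X; apply Rmult_integral in X; destruct X; lra. Qed.
End T.

Lemma sumR_const n c : sumR n (fun _ => c) = INR n * c.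
Proof. induction n; simpl sumR; [simpl; ring|]. rewrite IHn, S_INR. ring. Qed.

Lemma sin_Zpi (k : Z) : sin (PI * IZR k) = 0.
Proof. apply sin_eq_0_1. exists k. ring. Qed.

Lemma INRnz m : (0 < m)%nat -> INR m <> 0.
Proof. intros. apply not_0_INR. lia. Qed.

Lemma sin_zero_mod n m : (0 < m)%nat -> sin (PI * INR n / INR m) = 0 -> (n mod m = 0)%nat.
Proof. intros Hm H. apply sin_eq_0_0 in H. destruct H as [k Hk].
 assert (E : INR n = IZR k * INR m).
 { apply (Rmult_eq_reg_l PI). 2: apply PI_neq0. rewrite (Rmult_comm PI (IZR k * INR m)).
   replace (IZR k * INR m * PI) with (IZR k * PI * INR m) by ring. rewrite <- Hk. field. apply INRnz; auto. }
 rewrite !INR_IZR_INZ, <- mult_IZR in E. apply eq_IZR in E.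
 apply Nat2Z.inj. rewrite Nat2Z.inj_mod, E. simpl. apply Z.mod_mul. lia. Qed.

Lemma mod_sin_zero n m j : (0 < m)%nat -> (n mod m = 0)%nat -> sin (2 * INR j * (PI * INR n / INR m)) = 0.
Proof. intros Hm H. apply sin_eq_0_1. exists (2 * Z.of_nat j * Z.of_nat (n / m))%Z.
 rewrite (Nat.div_mod n m) at 1 by lia. rewrite H, Nat.add_0_r, mult_INR.
 rewrite !mult_IZR, <- !INR_IZR_INZ. simpl. field. apply INRnz; auto. Qed.

Definition Cf m n := - (2 / INR m) * sumR m (fun j => INR j * sin (2 * INR j * (PI * INR n / INR m))).
Definition Kf N n := - (2 / INR N) * sumR N (fun j => INR j * (INR N - INR j) * cos (2 * INR j * (PI * INR n / INR N))).

Lemma sinN m n : (0 < m)%nat -> sin (INR m * (PI * INR n / INR m)) = 0.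
Proof. intros. replace (INR m * (PI * INR n / INR m)) with (PI * IZR (Z.of_nat n)).
 apply sin_Zpi. rewrite <- INR_IZR_INZ. field. apply INRnz; auto. Qed.

Lemma Cf_cot m n : (0 < m)%nat -> (n mod m <> 0)%nat -> Cf m n = cot (PI * INR n / INR m).
Proof. intros Hm Hn. assert (hs : sin (PI * INR n / INR m) <> 0) by (intro X; apply Hn; apply sin_zero_mod; auto).
 unfold Cf, cot. rewrite Fcot; auto. 2: apply sinN; auto. field. split; auto. apply INRnz; auto. Qed.

Lemma Cf_zero m n : (0 < m)%nat -> (n mod m = 0)%nat -> Cf m n = 0.
Proof. intros. unfold Cf. rewrite sumR_zero. ring. intros. rewrite mod_sin_zero; auto. ring. Qed.

Lemma Kf_csc N n : (0 < N)%nat -> (n mod N <> 0)%nat -> Kf N n = / sin (PI * INR n / INR N) ^ 2.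
Proof. intros Hm Hn. assert (hs : sin (PI * INR n / INR N) <> 0) by (intro X; apply Hn; apply sin_zero_mod; auto).
 unfold Kf. rewrite Fcsc; auto. 2: apply sinN; auto. field. split; auto. apply INRnz; auto. Qed.

Definition indZ (N : nat) (M : Z) : R := if Z.eqb (M mod Z.of_nat N) 0 then 1 else 0.

Lemma orth N M : (0 < N)%nat -> sumR N (fun n => cos (2 * INR n * (PI * IZR M / INR N))) = INR N * indZ N M.
Proof. intros HN. set (phi := PI * IZR M / INR N).
 assert (hN : sin (INR N * phi) = 0).
 { unfold phi. replace (INR N * (PI * IZR M / INR N)) with (PI * IZR M). apply sin_Zpi. field. apply INRnz; auto. }
 destruct (Req_dec (sin phi) 0) as [H|H].
 - apply sin_eq_0_0 in H. destruct H as [k Hk].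
   assert (E : IZR M = IZR k * INR N).
   { apply (Rmult_eq_reg_l PI). 2: apply PI_neq0. rewrite (Rmult_comm PI (IZR k * INR N)).
     replace (IZR k * INR N * PI) with (IZR k * PI * INR N) by ring. rewrite <- Hk. unfold phi. field. apply INRnz; auto. }
   rewrite INR_IZR_INZ, <- mult_IZR in E. apply eq_IZR in E.
   unfold indZ. rewrite E, Z.mod_mul by lia. simpl.
   rewrite (sumR_ext _ _ (fun _ => 1)). rewrite sumR_const. ring.
   intros n _. rewrite Hk. replace (2 * INR n * (IZR k * PI)) with (2 * (PI * IZR (Z.of_nat n * k))).
   rewrite cos_2a_sin, sin_Zpi. ring. rewrite mult_IZR, <- INR_IZR_INZ. ring.
 - unfold indZ. rewrite sum_cos0 with (N := N); auto.
   destruct (Z.eqb_spec (M mod Z.of_nat N) 0) as [E|E]; [|ring].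
   exfalso. apply H. apply Z.mod_divide in E; [|lia]. destruct E as [k Hk].
   unfold phi. rewrite Hk, mult_IZR, <- INR_IZR_INZ. replace (PI * (IZR k * INR N) / INR N) with (PI * IZR k).
   apply sin_Zpi. field. apply INRnz; auto. Qed.

Lemma ind_one N M : (M mod Z.of_nat N = 0)%Z -> indZ N M = 1.
Proof. intros H. unfold indZ. rewrite H. reflexivity. Qed.

Lemma ind_zero N M : (M mod Z.of_nat N <> 0)%Z -> indZ N M = 0.
Proof. intros H. unfold indZ. destruct (Z.eqb_spec (M mod Z.of_nat N) 0); [contradiction|reflexivity]. Qed.

Lemma wsum N M j0 : (0 < N)%nat -> (0 <= j0 < Z.of_nat N)%Z -> ((M + j0) mod Z.of_nat N = 0)%Z ->
  sumR N (fun j => INR j * (INR N - INR j) * indZ N (M + Z.of_nat j)) = IZR j0 * (INR N - IZR j0).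
Proof. intros HN Hj0 Hm.
 rewrite (sumR_single N (Z.to_nat j0)).
 - rewrite ind_one. rewrite INR_IZR_INZ, Z2Nat.id by lia. ring. rewrite Z2Nat.id by lia. auto.
 - lia.
 - intros j Hj Hne. rewrite ind_zero. ring. intro X.
   apply Z.mod_divide in X; [|lia]. apply Z.mod_divide in Hm; [|lia].
   assert (Hd := Z.divide_sub_r _ _ _ X Hm). destruct Hd as [c Hc].
   apply Hne. assert (c = 0)%Z by nia. subst. lia. Qed.

Section V.
Variable N : nat.
Hypothesis HN : (0 < N)%nat.
Let w M := sumR N (fun j => INR j * (INR N - INR j) * indZ N (M + Z.of_nat j)).
Let NZ := Z.of_nat N.

Lemma modN k : ((k * Z.of_nat N) mod Z.of_nat N = 0)%Z.
Proof. apply Z.mod_mul. lia. Qed.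

Lemma V1 M : (0 <= M < Z.of_nat N)%Z -> w M = IZR M * (INR N - IZR M).
Proof. intros H. unfold w. destruct (Z.eq_dec M 0).
 - subst. assert (E : ((0 + 0) mod Z.of_nat N = 0)%Z) by (apply (modN 0)).
   rewrite (wsum N 0 0) by first [assumption | lia]. ring.
 - assert (E : ((M + (Z.of_nat N - M)) mod Z.of_nat N = 0)%Z).
   { replace (M + (Z.of_nat N - M))%Z with (1 * Z.of_nat N)%Z by ring. apply modN. }
   rewrite (wsum N M (Z.of_nat N - M)) by first [assumption | lia]. rewrite minus_IZR, <- INR_IZR_INZ. ring. Qed.

Lemma V2 M : (- Z.of_nat N < M <= 0)%Z -> w M = - IZR M * (INR N + IZR M).
Proof. intros H. unfold w.
 assert (E : ((M + - M) mod Z.of_nat N = 0)%Z).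
 { replace (M + - M)%Z with (0 * Z.of_nat N)%Z by ring. apply modN. }
 rewrite (wsum N M (- M)) by first [assumption | lia]. rewrite opp_IZR. ring. Qed.

Lemma V3 M : (Z.of_nat N <= M < 2 * Z.of_nat N)%Z -> w M = (IZR M - INR N) * (2 * INR N - IZR M).
Proof. intros H. unfold w. destruct (Z.eq_dec M (Z.of_nat N)).
 - subst. assert (E : ((Z.of_nat N + 0) mod Z.of_nat N = 0)%Z).
   { replace (Z.of_nat N + 0)%Z with (1 * Z.of_nat N)%Z by ring. apply modN. }
   rewrite (wsum N _ 0) by first [assumption | lia]. rewrite <- INR_IZR_INZ. ring.
 - assert (E : ((M + (2 * Z.of_nat N - M)) mod Z.of_nat N = 0)%Z).
   { replace (M + (2 * Z.of_nat N - M))%Z with (2 * Z.of_nat N)%Z by ring. apply modN. }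
   rewrite (wsum N M (2 * Z.of_nat N - M)) by first [assumption | lia].
   rewrite minus_IZR, mult_IZR, <- INR_IZR_INZ. ring. Qed.

Lemma V4 M : (- 2 * Z.of_nat N < M <= - Z.of_nat N)%Z -> w M = (- IZR M - INR N) * (2 * INR N + IZR M).
Proof. intros H. unfold w.
 assert (E : ((M + (- M - Z.of_nat N)) mod Z.of_nat N = 0)%Z).
 { replace (M + (- M - Z.of_nat N))%Z with (-1 * Z.of_nat N)%Z by ring. apply modN. }
 rewrite (wsum N M (- M - Z.of_nat N)) by first [assumption | lia].
 rewrite minus_IZR, opp_IZR, <- INR_IZR_INZ. ring. Qed.
End V.

Lemma sumR_mult_r n f c : sumR n f * c = sumR n (fun i => f i * c).
Proof. rewrite Rmult_comm, <- sumR_scal. apply sumR_ext. intros; ring. Qed.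

Lemma prod3 n1 n2 n3 f1 f2 f3 : sumR n1 f1 * sumR n2 f2 * sumR n3 f3 =
  sumR n1 (fun i => sumR n2 (fun j => sumR n3 (fun k => f1 i * f2 j * f3 k))).
Proof. rewrite sumR_mult, sumR_mult_r. apply sumR_ext. intros i _.
 rewrite sumR_mult. auto. Qed.

Lemma ssc a b c : sin a * sin b * cos c = / 4 * (cos (a - b + c) + cos (b - a + c) - cos (a + b + c) - cos (- a - b + c)).
Proof.
 replace (a - b + c) with (a + (c - b)) by ring. replace (b - a + c) with (b + (c - a)) by ring.
 replace (a + b + c) with (a + (b + c)) by ring. replace (- a - b + c) with (c - (a + b)) by ring.
 repeat rewrite ?cos_plus, ?cos_minus, ?sin_minus, ?sin_plus. field. Qed.

Definition WW N M := sumR N (fun j => INR j * (INR N - INR j) * indZ N (M + Z.of_nat j)).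

Section M.
Variables p q : nat.
Hypothesis hp : (0 < p)%nat.
Hypothesis hq : (0 < q)%nat.
Let N := (p * q)%nat.

Lemma Npos : (0 < N)%nat.
Proof. unfold N. lia. Qed.

Lemma step1 : the_sum p q = sumR N (fun n => Cf p n * Cf q n * Kf N n).
Proof. unfold the_sum. rewrite sum_filter_sumR. replace (S (p * q - 1)) with N by (unfold N; lia).
 apply sumR_ext. intros n Hn. unfold admissible.
 destruct (Nat.leb_spec 1 n) as [H1|H1]; simpl.
 - destruct (Nat.eqb_spec (n mod p) 0) as [H2|H2]; simpl.
   + rewrite (Cf_zero p n); auto. ring.
   + destruct (Nat.eqb_spec (n mod q) 0) as [H3|H3]; simpl.
     * rewrite (Cf_zero q n); auto. ring.
     * assert (HN : (n mod N <> 0)%nat) by (rewrite Nat.mod_small; unfold N in *; lia).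
       unfold term. rewrite (Cf_cot p n), (Cf_cot q n), (Kf_csc N n) by (auto; apply Npos).
       unfold N. unfold Rdiv. ring.
 - assert (n = O) by lia. subst. rewrite (Cf_zero p 0); auto. ring. apply Nat.mod_0_l; lia.
Qed.

Definition M1 j1 j2 := (Z.of_nat j1 * Z.of_nat q - Z.of_nat j2 * Z.of_nat p)%Z.
Definition M2 j1 j2 := (Z.of_nat j1 * Z.of_nat q + Z.of_nat j2 * Z.of_nat p)%Z.

Lemma ang (n : nat) (z : Z) (A : R) : A = IZR z * (2 * PI * INR n / INR N) ->
  cos A = cos (2 * INR n * (PI * IZR z / INR N)).
Proof. intros ->. f_equal. field. apply INRnz, Npos. Qed.

Lemma inner_n j1 j2 j3 :
  sumR N (fun n => (INR j1 * sin (2 * INR j1 * (PI * INR n / INR p))) *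
                   (INR j2 * sin (2 * INR j2 * (PI * INR n / INR q))) *
                   (INR j3 * (INR N - INR j3) * cos (2 * INR j3 * (PI * INR n / INR N)))) =
  INR j1 * INR j2 * (INR j3 * (INR N - INR j3)) * (INR N / 4) *
   (indZ N (M1 j1 j2 + Z.of_nat j3) + indZ N (- M1 j1 j2 + Z.of_nat j3)
    - indZ N (M2 j1 j2 + Z.of_nat j3) - indZ N (- M2 j1 j2 + Z.of_nat j3)).
Proof.
 assert (Hp := INRnz p hp). assert (Hq := INRnz q hq).
 assert (HNq : INR N = INR p * INR q) by (unfold N; apply mult_INR).
 set (c := INR j1 * INR j2 * (INR j3 * (INR N - INR j3)) * / 4).
 rewrite (sumR_ext _ _ (fun n => c * (cos (2 * INR n * (PI * IZR (M1 j1 j2 + Z.of_nat j3) / INR N))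
     + cos (2 * INR n * (PI * IZR (- M1 j1 j2 + Z.of_nat j3) / INR N))
     - cos (2 * INR n * (PI * IZR (M2 j1 j2 + Z.of_nat j3) / INR N))
     - cos (2 * INR n * (PI * IZR (- M2 j1 j2 + Z.of_nat j3) / INR N))))).
 - rewrite sumR_scal, !sumR_minus, sumR_plus, !orth by apply Npos. unfold c. field.
 - intros n _. unfold c.
   replace ((INR j1 * sin (2 * INR j1 * (PI * INR n / INR p))) *
     (INR j2 * sin (2 * INR j2 * (PI * INR n / INR q))) *
     (INR j3 * (INR N - INR j3) * cos (2 * INR j3 * (PI * INR n / INR N))))
   with (INR j1 * INR j2 * (INR j3 * (INR N - INR j3)) *
     (sin (2 * INR j1 * (PI * INR n / INR p)) * sin (2 * INR j2 * (PI * INR n / INR q)) * cos (2 * INR j3 * (PI * INR n / INR N)))) by ring.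
   rewrite ssc. set (a := 2 * INR j1 * (PI * INR n / INR p)). set (b := 2 * INR j2 * (PI * INR n / INR q)).
   set (e := 2 * INR j3 * (PI * INR n / INR N)).
   assert (Z1 : a - b + e = 2 * INR n * (PI * IZR (M1 j1 j2 + Z.of_nat j3) / INR N)).
   { unfold M1, a, b, e. repeat rewrite ?plus_IZR, ?minus_IZR, ?opp_IZR, ?mult_IZR, <- ?INR_IZR_INZ.
     rewrite HNq. field; auto. }
   assert (Z2 : b - a + e = 2 * INR n * (PI * IZR (- M1 j1 j2 + Z.of_nat j3) / INR N)).
   { unfold M1, a, b, e. repeat rewrite ?plus_IZR, ?minus_IZR, ?opp_IZR, ?mult_IZR, <- ?INR_IZR_INZ.
     rewrite HNq. field; auto. }
   assert (Z3 : a + b + e = 2 * INR n * (PI * IZR (M2 j1 j2 + Z.of_nat j3) / INR N)).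
   { unfold M2, a, b, e. repeat rewrite ?plus_IZR, ?minus_IZR, ?opp_IZR, ?mult_IZR, <- ?INR_IZR_INZ.
     rewrite HNq. field; auto. }
   assert (Z4 : - a - b + e = 2 * INR n * (PI * IZR (- M2 j1 j2 + Z.of_nat j3) / INR N)).
   { unfold M2, a, b, e. repeat rewrite ?plus_IZR, ?minus_IZR, ?opp_IZR, ?mult_IZR, <- ?INR_IZR_INZ.
     rewrite HNq. field; auto. }
   rewrite Z1, Z2, Z3, Z4. ring.
Qed.

Lemma step2 : sumR N (fun n => Cf p n * Cf q n * Kf N n) =
  - (2 / INR N) * sumR p (fun j1 => sumR q (fun j2 => INR j1 * INR j2 *
     (WW N (M1 j1 j2) + WW N (- M1 j1 j2) - WW N (M2 j1 j2) - WW N (- M2 j1 j2)))).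
Proof.
 assert (Hp := INRnz p hp). assert (Hq := INRnz q hq).
 assert (HNq : INR N = INR p * INR q) by (unfold N; apply mult_INR).
 set (c0 := (- (2 / INR p)) * (- (2 / INR q)) * (- (2 / INR N))).
 rewrite (sumR_ext _ _ (fun n => c0 * sumR p (fun j1 => sumR q (fun j2 => sumR N (fun j3 =>
    (INR j1 * sin (2 * INR j1 * (PI * INR n / INR p))) *
    (INR j2 * sin (2 * INR j2 * (PI * INR n / INR q))) *
    (INR j3 * (INR N - INR j3) * cos (2 * INR j3 * (PI * INR n / INR N)))))))).
 2:{ intros n _. unfold Cf, Kf, c0. rewrite <- prod3. ring. }
 rewrite sumR_scal, sumR_swap.
 rewrite (sumR_ext _ _ (fun j1 => sumR q (fun j2 => sumR N (fun j3 =>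
    INR j1 * INR j2 * (INR j3 * (INR N - INR j3)) * (INR N / 4) *
   (indZ N (M1 j1 j2 + Z.of_nat j3) + indZ N (- M1 j1 j2 + Z.of_nat j3)
    - indZ N (M2 j1 j2 + Z.of_nat j3) - indZ N (- M2 j1 j2 + Z.of_nat j3)))))).
 2:{ intros j1 _. rewrite sumR_swap. apply sumR_ext. intros j2 _. rewrite sumR_swap. apply sumR_ext.
     intros j3 _. apply inner_n. }
 unfold c0. rewrite <- sumR_scal, <- sumR_scal. apply sumR_ext. intros j1 _.
 rewrite <- !sumR_scal. apply sumR_ext. intros j2 _.
 rewrite (sumR_ext _ _ (fun j3 => INR j1 * INR j2 * (INR N / 4) *
   (INR j3 * (INR N - INR j3) * indZ N (M1 j1 j2 + Z.of_nat j3) + INR j3 * (INR N - INR j3) * indZ N (- M1 j1 j2 + Z.of_nat j3)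
    - INR j3 * (INR N - INR j3) * indZ N (M2 j1 j2 + Z.of_nat j3) - INR j3 * (INR N - INR j3) * indZ N (- M2 j1 j2 + Z.of_nat j3)))).
 2:{ intros. ring. }
 rewrite sumR_scal, !sumR_minus, sumR_plus. unfold WW. rewrite HNq. field. auto.
Qed.
End M.

Definition PA1 (x y P Q : R) := (x*Q - y*P) * (P*Q - (x*Q - y*P)).
Definition PB1 (x y P Q : R) := - (x*Q - y*P) * (P*Q + (x*Q - y*P)).
Definition PA2 (x y P Q : R) := (x*Q + y*P) * (P*Q - (x*Q + y*P)).
Definition PB2 (x y P Q : R) := ((x*Q + y*P) - P*Q) * (2*(P*Q) - (x*Q + y*P)).
Definition FA1 (x m P Q : R) : R := (- 6 * x^2 * m^2 * Q^2 + 6 * x^2 * m * Q^2 + 8 * x * P * m^3 * Q + 6 * x * P * m^2 * Q^2 - 12 * x * P * m^2 * Q - 6 * x * P * m * Q^2 + 4 * x * P * m * Q - 3 * P^2 * m^4 - 4 * P^2 * m^3 * Q + 6 * P^2 * m^3 + 6 * P^2 * m^2 * Q - 3 * P^2 * m^2 - 2 * P^2 * m * Q) / 12.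
Definition FB1 (x m P Q : R) : R := (- 6 * x^2 * m^2 * Q^2 + 6 * x^2 * m * Q^2 + 8 * x * P * m^3 * Q - 6 * x * P * m^2 * Q^2 - 12 * x * P * m^2 * Q + 6 * x * P * m * Q^2 + 4 * x * P * m * Q - 3 * P^2 * m^4 + 4 * P^2 * m^3 * Q + 6 * P^2 * m^3 - 6 * P^2 * m^2 * Q - 3 * P^2 * m^2 + 2 * P^2 * m * Q) / 12.
Definition FA2 (x m P Q : R) : R := (- 6 * x^2 * m^2 * Q^2 + 6 * x^2 * m * Q^2 - 8 * x * P * m^3 * Q + 6 * x * P * m^2 * Q^2 + 12 * x * P * m^2 * Q - 6 * x * P * m * Q^2 - 4 * x * P * m * Q - 3 * P^2 * m^4 + 4 * P^2 * m^3 * Q + 6 * P^2 * m^3 - 6 * P^2 * m^2 * Q - 3 * P^2 * m^2 + 2 * P^2 * m * Q) / 12.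
Definition FB2 (x m P Q : R) : R := (- 6 * x^2 * m^2 * Q^2 + 6 * x^2 * m * Q^2 - 8 * x * P * m^3 * Q + 18 * x * P * m^2 * Q^2 + 12 * x * P * m^2 * Q - 18 * x * P * m * Q^2 - 4 * x * P * m * Q - 3 * P^2 * m^4 + 12 * P^2 * m^3 * Q + 6 * P^2 * m^3 - 12 * P^2 * m^2 * Q^2 - 18 * P^2 * m^2 * Q - 3 * P^2 * m^2 + 12 * P^2 * m * Q^2 + 6 * P^2 * m * Q) / 12.
Definition Hp (m K P : R) : R := (20 * K^4 * P^5 * m^3 + 30 * K^4 * P^5 * m^2 + 10 * K^4 * P^5 * m - 45 * K^4 * P^4 * m^4 - 90 * K^4 * P^4 * m^3 - 45 * K^4 * P^4 * m^2 + 24 * K^4 * P^3 * m^5 + 60 * K^4 * P^3 * m^4 + 40 * K^4 * P^3 * m^3 - 4 * K^4 * P^3 * m + 80 * K^3 * P^4 * m^3 + 120 * K^3 * P^4 * m^2 + 40 * K^3 * P^4 * m - 180 * K^3 * P^3 * m^4 - 360 * K^3 * P^3 * m^3 - 180 * K^3 * P^3 * m^2 + 96 * K^3 * P^2 * m^5 + 240 * K^3 * P^2 * m^4 + 160 * K^3 * P^2 * m^3 - 16 * K^3 * P^2 * m + 60 * K^2 * P^3 * m^3 + 90 * K^2 * P^3 * m^2 + 30 * K^2 * P^3 * m - 135 * K^2 * P^2 * m^4 - 270 * K^2 * P^2 * m^3 - 135 * K^2 * P^2 * m^2 + 72 * K^2 * P * m^5 + 180 * K^2 * P * m^4 + 120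 * K^2 * P * m^3 - 12 * K^2 * P * m) / 90.
Definition Hm (m K P : R) : R := (20 * K^4 * P^5 * m^3 + 30 * K^4 * P^5 * m^2 + 10 * K^4 * P^5 * m - 45 * K^4 * P^4 * m^4 - 90 * K^4 * P^4 * m^3 - 45 * K^4 * P^4 * m^2 + 24 * K^4 * P^3 * m^5 + 60 * K^4 * P^3 * m^4 + 40 * K^4 * P^3 * m^3 - 4 * K^4 * P^3 * m - 80 * K^3 * P^4 * m^3 - 120 * K^3 * P^4 * m^2 - 40 * K^3 * P^4 * m + 180 * K^3 * P^3 * m^4 + 360 * K^3 * P^3 * m^3 + 180 * K^3 * P^3 * m^2 - 96 * K^3 * P^2 * m^5 - 240 * K^3 * P^2 * m^4 - 160 * K^3 * P^2 * m^3 + 16 * K^3 * P^2 * m + 60 * K^2 * P^3 * m^3 + 90 * K^2 * P^3 * m^2 + 30 * K^2 * P^3 * m - 135 * K^2 * P^2 * m^4 - 270 * K^2 * P^2 * m^3 - 135 * K^2 * P^2 * m^2 + 72 * K^2 * P * m^5 + 180 * K^2 * P * m^4 + 120 * K^2 * P * m^3 - 12 * K^2 * P * m) / 90.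

Lemma sFA1 x P Q m : sumR m (fun j => INR j * PA1 x (INR j) P Q) = FA1 x (INR m) P Q.
Proof. induction m; simpl sumR. - unfold FA1. simpl. field. - rewrite IHm, S_INR. unfold FA1, PA1. field. Qed.
Lemma sFB1 x P Q m : sumR m (fun j => INR j * PB1 x (INR j) P Q) = FB1 x (INR m) P Q.
Proof. induction m; simpl sumR. - unfold FB1. simpl. field. - rewrite IHm, S_INR. unfold FB1, PB1. field. Qed.
Lemma sFA2 x P Q m : sumR m (fun j => INR j * PA2 x (INR j) P Q) = FA2 x (INR m) P Q.
Proof. induction m; simpl sumR. - unfold FA2. simpl. field. - rewrite IHm, S_INR. unfold FA2, PA2. field. Qed.
Lemma sFB2 x P Q m : sumR m (fun j => INR j * PB2 x (INR j) P Q) = FB2 x (INR m) P Q.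
Proof. induction m; simpl sumR. - unfold FB2. simpl. field. - rewrite IHm, S_INR. unfold FB2, PB2. field. Qed.

Definition gp (x K P : R) := let Q := K*P+1 in let s := x*K+1 in let t := K*(P-x)+1 in
  2*x*((FA1 x s P Q + FB1 x Q P Q - FB1 x s P Q) - (FA2 x t P Q + FB2 x Q P Q - FB2 x t P Q)).
Definition gm (x K P : R) := let Q := K*P-1 in let s := x*K in let t := K*(P-x) in
  2*x*((FA1 x s P Q + FB1 x Q P Q - FB1 x s P Q) - (FA2 x t P Q + FB2 x Q P Q - FB2 x t P Q)).

Lemma sHp K P m : sumR m (fun i => gp (INR i + 1) K P) = Hp (INR m) K P.
Proof. induction m; simpl sumR. - unfold Hp. simpl. field. - rewrite IHm, S_INR. unfold gp, Hp, FA1, FB1, FA2, FB2. field. Qed.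
Lemma sHm K P m : sumR m (fun i => gm (INR i + 1) K P) = Hm (INR m) K P.
Proof. induction m; simpl sumR. - unfold Hm. simpl. field. - rewrite IHm, S_INR. unfold gm, Hm, FA1, FB1, FA2, FB2. field. Qed.

Lemma WWa N M : (0 < N)%nat -> (0 <= M < Z.of_nat N)%Z ->
  WW N M + WW N (- M) = 2 * (IZR M * (INR N - IZR M)).
Proof. intros HN H. unfold WW. rewrite V1, V2 by (auto; lia). rewrite opp_IZR. ring. Qed.
Lemma WWb N M : (0 < N)%nat -> (- Z.of_nat N < M <= 0)%Z ->
  WW N M + WW N (- M) = 2 * (- IZR M * (INR N + IZR M)).
Proof. intros HN H. unfold WW. rewrite V2, V1 by (auto; lia). rewrite opp_IZR. ring. Qed.
Lemma WWc N M : (0 < N)%nat -> (Z.of_nat N <= M < 2 * Z.of_nat N)%Z ->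
  WW N M + WW N (- M) = 2 * ((IZR M - INR N) * (2 * INR N - IZR M)).
Proof. intros HN H. unfold WW. rewrite V3, V4 by (auto; lia). rewrite opp_IZR. ring. Qed.

Lemma IZR_M1 p q j1 j2 : IZR (M1 p q j1 j2) = INR j1 * INR q - INR j2 * INR p.
Proof. unfold M1. rewrite minus_IZR, !mult_IZR, <- !INR_IZR_INZ. ring. Qed.
Lemma IZR_M2 p q j1 j2 : IZR (M2 p q j1 j2) = INR j1 * INR q + INR j2 * INR p.
Proof. unfold M2. rewrite plus_IZR, !mult_IZR, <- !INR_IZR_INZ. ring. Qed.

Section Plus.
Variables p q k : nat.
Hypothesis hq : q = (k * p + 1)%nat.
Hypothesis hp : (2 <= p)%nat.
Hypothesis hk : (1 <= k)%nat.
Let N := (p * q)%nat.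

Lemma Npos' : (0 < N)%nat.
Proof. unfold N. subst. nia. Qed.

Lemma NZ : Z.of_nat N = (Z.of_nat p * Z.of_nat q)%Z.
Proof. unfold N. apply Nat2Z.inj_mul. Qed.

Lemma INRN : INR N = INR p * INR q.
Proof. unfold N. apply mult_INR. Qed.

Lemma reg1 j1 j2 : (j1 < p)%nat -> (j2 < q)%nat ->
  WW N (M1 p q j1 j2) + WW N (- M1 p q j1 j2) =
  2 * (if (j2 <? j1 * k + 1)%nat then PA1 (INR j1) (INR j2) (INR p) (INR q) else PB1 (INR j1) (INR j2) (INR p) (INR q)).
Proof. intros H1 H2. destruct (Nat.ltb_spec j2 (j1 * k + 1)) as [H|H].
 - rewrite WWa. rewrite IZR_M1, INRN. unfold PA1. ring. apply Npos'.
   rewrite NZ. unfold M1. subst q. nia.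
 - rewrite WWb. rewrite IZR_M1, INRN. unfold PB1. ring. apply Npos'.
   rewrite NZ. unfold M1. subst q. nia.
Qed.

Lemma reg2 j1 j2 : (j1 < p)%nat -> (j2 < q)%nat ->
  WW N (M2 p q j1 j2) + WW N (- M2 p q j1 j2) =
  2 * (if (j2 <? k * (p - j1) + 1)%nat then PA2 (INR j1) (INR j2) (INR p) (INR q) else PB2 (INR j1) (INR j2) (INR p) (INR q)).
Proof. intros H1 H2. destruct (Nat.ltb_spec j2 (k * (p - j1) + 1)) as [H|H].
 - rewrite WWa. rewrite IZR_M2, INRN. unfold PA2. ring. apply Npos'.
   rewrite NZ. unfold M2. assert (E : (k * (p - j1) = k * p - k * j1)%nat) by nia. subst q. nia.
 - rewrite WWc. rewrite IZR_M2, INRN. unfold PB2. ring. apply Npos'.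
   rewrite NZ. unfold M2. assert (E : (k * (p - j1) = k * p - k * j1)%nat) by nia. subst q. nia.
Qed.

Lemma per_j1 j1 : (j1 < p)%nat ->
  sumR q (fun j2 => INR j1 * INR j2 * (WW N (M1 p q j1 j2) + WW N (- M1 p q j1 j2) - WW N (M2 p q j1 j2) - WW N (- M2 p q j1 j2)))
  = gp (INR j1) (INR k) (INR p).
Proof. intros H1.
 set (X := INR j1). set (P := INR p). set (Q := INR q).
 rewrite (sumR_ext _ _ (fun j2 => 2 * X * (INR j2 * (if (j2 <? j1 * k + 1)%nat then PA1 X (INR j2) P Q else PB1 X (INR j2) P Q)
    - INR j2 * (if (j2 <? k * (p - j1) + 1)%nat then PA2 X (INR j2) P Q else PB2 X (INR j2) P Q)))).
 2:{ intros j2 H2. replace (WW N (M1 p q j1 j2) + WW N (- M1 p q j1 j2) - WW N (M2 p q j1 j2) - WW N (- M2 p q j1 j2))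
     with ((WW N (M1 p q j1 j2) + WW N (- M1 p q j1 j2)) - (WW N (M2 p q j1 j2) + WW N (- M2 p q j1 j2))) by ring.
     rewrite reg1, reg2 by auto. unfold X, P, Q. ring. }
 rewrite sumR_scal, sumR_minus.
 rewrite (sumR_piece q (j1 * k + 1) _ (fun j => INR j * PA1 X (INR j) P Q) (fun j => INR j * PB1 X (INR j) P Q)).
 3:{ intros j Hj. destruct (Nat.ltb_spec j (j1 * k + 1)); [reflexivity|lia]. }
 3:{ intros j Hj. destruct (Nat.ltb_spec j (j1 * k + 1)); [lia|reflexivity]. }
 2:{ subst q. nia. }
 rewrite (sumR_piece q (k * (p - j1) + 1) (fun j2 => INR j2 * (if (j2 <? k * (p - j1) + 1)%nat then PA2 X (INR j2) P Q else PB2 X (INR j2) P Q)) (fun j => INR j * PA2 X (INR j) P Q) (fun j => INR j * PB2 X (INR j) P Q)).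
 3:{ intros j Hj. destruct (Nat.ltb_spec j (k * (p - j1) + 1)); [reflexivity|lia]. }
 3:{ intros j Hj. destruct (Nat.ltb_spec j (k * (p - j1) + 1)); [lia|reflexivity]. }
 2:{ subst q. nia. }
 rewrite !sFA1, !sFB1, !sFA2, !sFB2.
 assert (EQ : Q = INR k * P + 1) by (unfold Q, P; rewrite hq, plus_INR, mult_INR; simpl; ring).
 assert (Es : INR (j1 * k + 1) = X * INR k + 1) by (unfold X; rewrite plus_INR, mult_INR; simpl; ring).
 assert (Et : INR (k * (p - j1) + 1) = INR k * (P - X) + 1) by (unfold X, P; rewrite plus_INR, mult_INR, minus_INR by lia; simpl; ring).
 rewrite Es, Et. unfold gp. change (INR q) with Q. rewrite EQ. reflexivity.
Qed.

Lemma total : sumR p (fun j1 => sumR q (fun j2 => INR j1 * INR j2 * (WW N (M1 p q j1 j2) + WW N (- M1 p q j1 j2) - WW N (M2 p q j1 j2) - WW N (- M2 p q j1 j2))))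
  = Hp (INR p - 1) (INR k) (INR p).
Proof.
 replace p with (S (p - 1)) at 1 by lia. rewrite sumR_shift.
 rewrite sumR_zero. 2:{ intros. simpl. ring. }
 rewrite (sumR_ext _ _ (fun i => gp (INR i + 1) (INR k) (INR p))).
 2:{ intros i Hi. rewrite per_j1 by lia. rewrite S_INR. reflexivity. }
 rewrite sHp. rewrite minus_INR by lia. simpl. f_equal. ring.
Qed.
End Plus.

Section Minus.
Variables p q k : nat.
Hypothesis hq : (q + 1 = k * p)%nat.
Hypothesis hq2 : (2 <= q)%nat.
Hypothesis hp : (2 <= p)%nat.
Hypothesis hk : (1 <= k)%nat.
Let N := (p * q)%nat.

Lemma Npos'' : (0 < N)%nat.
Proof. unfold N. nia. Qed.

Lemma NZ' : Z.of_nat N = (Z.of_nat p * Z.of_nat q)%Z.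
Proof. unfold N. apply Nat2Z.inj_mul. Qed.

Lemma INRN' : INR N = INR p * INR q.
Proof. unfold N. apply mult_INR. Qed.

Lemma reg1m j1 j2 : (j1 < p)%nat -> (j2 < q)%nat ->
  WW N (M1 p q j1 j2) + WW N (- M1 p q j1 j2) =
  2 * (if (j2 <? j1 * k)%nat then PA1 (INR j1) (INR j2) (INR p) (INR q) else PB1 (INR j1) (INR j2) (INR p) (INR q)).
Proof. intros H1 H2. destruct (Nat.ltb_spec j2 (j1 * k)) as [H|H].
 - rewrite WWa. rewrite IZR_M1, INRN'. unfold PA1. ring. apply Npos''.
   rewrite NZ'. unfold M1. nia.
 - rewrite WWb. rewrite IZR_M1, INRN'. unfold PB1. ring. apply Npos''.
   rewrite NZ'. unfold M1. nia.
Qed.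

Lemma reg2m j1 j2 : (j1 < p)%nat -> (j2 < q)%nat ->
  WW N (M2 p q j1 j2) + WW N (- M2 p q j1 j2) =
  2 * (if (j2 <? k * (p - j1))%nat then PA2 (INR j1) (INR j2) (INR p) (INR q) else PB2 (INR j1) (INR j2) (INR p) (INR q)).
Proof. intros H1 H2. destruct (Nat.ltb_spec j2 (k * (p - j1))) as [H|H].
 - rewrite WWa. rewrite IZR_M2, INRN'. unfold PA2. ring. apply Npos''.
   rewrite NZ'. unfold M2. assert (E : (k * (p - j1) = k * p - k * j1)%nat) by nia. nia.
 - rewrite WWc. rewrite IZR_M2, INRN'. unfold PB2. ring. apply Npos''.
   rewrite NZ'. unfold M2. assert (E : (k * (p - j1) = k * p - k * j1)%nat) by nia. nia.
Qed.

Lemma per_j1m j1 : (1 <= j1 < p)%nat ->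
  sumR q (fun j2 => INR j1 * INR j2 * (WW N (M1 p q j1 j2) + WW N (- M1 p q j1 j2) - WW N (M2 p q j1 j2) - WW N (- M2 p q j1 j2)))
  = gm (INR j1) (INR k) (INR p).
Proof. intros H1.
 set (X := INR j1). set (P := INR p). set (Q := INR q).
 rewrite (sumR_ext _ _ (fun j2 => 2 * X * (INR j2 * (if (j2 <? j1 * k)%nat then PA1 X (INR j2) P Q else PB1 X (INR j2) P Q)
    - INR j2 * (if (j2 <? k * (p - j1))%nat then PA2 X (INR j2) P Q else PB2 X (INR j2) P Q)))).
 2:{ intros j2 H2. replace (WW N (M1 p q j1 j2) + WW N (- M1 p q j1 j2) - WW N (M2 p q j1 j2) - WW N (- M2 p q j1 j2))
     with ((WW N (M1 p q j1 j2) + WW N (- M1 p q j1 j2)) - (WW N (M2 p q j1 j2) + WW N (- M2 p q j1 j2))) by ring.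
     rewrite reg1m, reg2m by lia. unfold X, P, Q. ring. }
 rewrite sumR_scal, sumR_minus.
 rewrite (sumR_piece q (j1 * k) _ (fun j => INR j * PA1 X (INR j) P Q) (fun j => INR j * PB1 X (INR j) P Q)).
 3:{ intros j Hj. destruct (Nat.ltb_spec j (j1 * k)); [reflexivity|lia]. }
 3:{ intros j Hj. destruct (Nat.ltb_spec j (j1 * k)); [lia|reflexivity]. }
 2:{ nia. }
 rewrite (sumR_piece q (k * (p - j1)) (fun j2 => INR j2 * (if (j2 <? k * (p - j1))%nat then PA2 X (INR j2) P Q else PB2 X (INR j2) P Q)) (fun j => INR j * PA2 X (INR j) P Q) (fun j => INR j * PB2 X (INR j) P Q)).
 3:{ intros j Hj. destruct (Nat.ltb_spec j (k * (p - j1))); [reflexivity|lia]. }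
 3:{ intros j Hj. destruct (Nat.ltb_spec j (k * (p - j1))); [lia|reflexivity]. }
 2:{ nia. }
 rewrite !sFA1, !sFB1, !sFA2, !sFB2.
 assert (EQ : Q = INR k * P - 1). { unfold Q, P. rewrite <- mult_INR, <- hq, plus_INR. simpl. ring. }
 assert (Es : INR (j1 * k) = X * INR k) by (unfold X; rewrite mult_INR; ring).
 assert (Et : INR (k * (p - j1)) = INR k * (P - X)) by (unfold X, P; rewrite mult_INR, minus_INR by lia; ring).
 rewrite Es, Et. unfold gp. change (INR q) with Q. rewrite EQ. reflexivity.
Qed.

Lemma totalm : sumR p (fun j1 => sumR q (fun j2 => INR j1 * INR j2 * (WW N (M1 p q j1 j2) + WW N (- M1 p q j1 j2) - WW N (M2 p q j1 j2) - WW N (- M2 p q j1 j2))))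
  = Hm (INR p - 1) (INR k) (INR p).
Proof.
 replace p with (S (p - 1)) at 1 by lia. rewrite sumR_shift.
 rewrite sumR_zero. 2:{ intros. simpl. ring. }
 rewrite (sumR_ext _ _ (fun i => gm (INR i + 1) (INR k) (INR p))).
 2:{ intros i Hi. rewrite per_j1m by lia. rewrite S_INR. reflexivity. }
 rewrite sHm. rewrite minus_INR by lia. simpl. f_equal. ring.
Qed.
End Minus.

Theorem mainTheorem12 (p q : nat) (hp : (2 <= p)%nat) (hq : (2 <= q)%nat) :
  ((q mod p = 1 mod p)%nat ->
     the_sum p q = / (45 * INR p) * (INR p ^ 2 - 1) * (INR p ^ 2 - 4)
                   * (INR q - 1) ^ 2 * (INR q + 2)) /\
  (((q + 1) mod p = 0)%nat ->
     the_sum p q = / (45 * INR p) * (INR p ^ 2 - 1) * (INR p ^ 2 - 4)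
                   * (INR q + 1) ^ 2 * (INR q - 2)).
Proof.
 assert (Pnz : INR p <> 0) by (apply not_0_INR; lia).
 split; intros H.
 - rewrite (Nat.mod_small 1 p) in H by lia.
   set (k := (q / p)%nat).
   assert (Hq : q = (k * p + 1)%nat) by (unfold k; rewrite (Nat.div_mod q p) at 1 by lia; rewrite H; lia).
   assert (Hk : (1 <= k)%nat) by (destruct k; lia).
   rewrite step1, step2 by lia. rewrite (total p q k Hq hp Hk).
   assert (EQ : INR q = INR k * INR p + 1) by (rewrite Hq, plus_INR, mult_INR; simpl; ring).
   assert (Qnz : INR k * INR p + 1 <> 0) by (rewrite <- EQ; apply not_0_INR; lia).
   rewrite mult_INR, EQ. unfold Hp. field. auto.
 - set (k := ((q + 1) / p)%nat).
   assert (Hq : (q + 1 = k * p)%nat) by (unfold k; rewrite (Nat.div_mod (q + 1) p) at 1 by lia; rewrite H; lia).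
   assert (Hk : (1 <= k)%nat) by (destruct k; lia).
   rewrite step1, step2 by lia. rewrite (totalm p q k Hq hq hp Hk).
   assert (EQ : INR q = INR k * INR p - 1) by (rewrite <- mult_INR, <- Hq, plus_INR; simpl; ring).
   assert (Qnz : INR k * INR p - 1 <> 0) by (rewrite <- EQ; apply not_0_INR; lia).
   rewrite mult_INR, EQ. unfold Hm. field. auto.
Qed.
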